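(* Let $r\in\mathbb{F}_2((x^{-1}))$ with $\deg(r)\ge0$. If $[r](0)=1$ or $[r](1)=1$, then $[S(r)](0)=1$.
   Context: $\mathbb{F}_2((x^{-1}))$ is the field of formal series $\sum_{z\in\mathbb{Z}}a_zx^z$, $a_z\in\mathbb{F}_2$, with $a_z\ne0$ for only finitely many positive $z$; $\deg$ is the largest exponent with nonzero coefficient. The polynomial part is $[\sum a_zx^z]=\sum_{z\ge0}a_zx^z$. $S(r)=\frac{r}{x+1}$ if $[r](1)=0$ and $S(r)=\frac{xr}{x+1}$ if $[r](1)=1$. *)

(* Defs.v *)
From HB Require Import structures.
From mathcomp Require Import all_boot all_order all_algebra.
Set Implicit Arguments. Unset Strict Implicit. Unset Printing Implicit Defensive.
Import Order.TTheory GRing.Theory Num.Theory.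
Local Open Scope ring_scope.

(* An element of F_2((x^{-1})): coefficients a_z in 'F_2 indexed by z : int,
   together with a bound N such that a_z = 0 for all z > N
   (i.e. only finitely many positive exponents carry a nonzero coefficient). *)
Record lser := LSer {
  coef : int -> 'F_2;
  bnd : nat;
  coef_bnd : forall z : int, (bnd%:Z < z) -> coef z = 0
}.

Definition polypart (r : lser) : {poly 'F_2} :=
  \poly_(i < (bnd r).+1) coef r i%:Z.

Definition deg_ge0 (r : lser) : Prop := exists n : nat, coef r n%:Z != 0.

(* s = t / (x+1) in F_2((x^{-1})) means (x+1) s = t; the coefficient of x^z in
   (x+1) s is s_{z-1} + s_z.  Here t is given by its coefficient function. *)
Definition is_quot_x1 (t : int -> 'F_2) (s : lser) : Prop :=
  forall z : int, coef s (z - 1) + coef s z = t z.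

(* s = S(r):  S(r) = r/(x+1) if [r](1) = 0, and S(r) = x r/(x+1) if [r](1) = 1.
   The coefficient of x^z in x r is r_{z-1}. *)
Definition is_S (r s : lser) : Prop :=
  if (polypart r).[1] == 1 then is_quot_x1 (fun z => coef r (z - 1)) s
  else is_quot_x1 (coef r) s.

(* Main.v *)
Require Import Defs.
From mathcomp Require Import all_boot all_order all_algebra.
Import GRing.Theory.
Local Open Scope ring_scope.

Lemma F2_dbl (b : 'F_2) : b + b = 0.
Proof. by case: b => [[|[|//]]] ? ; apply/val_inj. Qed.

Lemma F2_sub (a b c : 'F_2) : a + b = c -> a = b + c.
Proof. by move<-; rewrite addrCA F2_dbl addr0. Qed.

Lemma pp0 (r : lser) : (polypart r).[0] = coef r 0.
Proof. by rewrite horner_coef0 coef_poly. Qed.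

Lemma pp1 (r : lser) n : (bnd r < n)%N ->
  (polypart r).[1] = \sum_(0 <= i < n) coef r i%:Z.
Proof.
move=> Hn; rewrite horner_poly.
rewrite (big_cat_nat (n:=(bnd r).+1)) //= [X in _ + X]big1_seq ?addr0.
  by rewrite big_mkord; apply: eq_bigr => i _; rewrite expr1n mulr1.
move=> i /andP[_]; rewrite mem_index_iota => /andP[Hi _].
by apply: coef_bnd; rewrite ltz_nat.
Qed.

Lemma telesc (s : lser) (t : int -> 'F_2) : is_quot_x1 t s ->
  forall m : nat, coef s 0 = coef s m%:Z + \sum_(1 <= k < m.+1) t k%:Z.
Proof.
move=> H; elim=> [|m IH]; first by rewrite big_geq // addr0.
rewrite big_nat_recr //= IH [_ + t _]addrC addrA; congr (_ + _).
apply: F2_sub; have := H m.+1%:Z.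
by rewrite -[m.+1]addn1 PoszD addrK.
Qed.

Theorem lemma3p2 (r s : lser) :
  deg_ge0 r ->
  ((polypart r).[0] = 1 \/ (polypart r).[1] = 1) ->
  is_S r s ->
  (polypart s).[0] = 1.
Proof.
move=> _ Hr; rewrite /is_S pp0.
set m := (maxn (bnd r) (bnd s)).+1.
have Hms : coef s m%:Z = 0 by apply: coef_bnd; rewrite ltz_nat /m ltnS leq_maxr.
have Hmr : (bnd r < m)%N by rewrite /m ltnS leq_maxl.
case: eqP => H1 HS; rewrite (@telesc _ _ HS m) Hms add0r.
  rewrite -H1 (@pp1 r m Hmr).
  rewrite big_add1 /=; apply: eq_bigr => i _.
  by rewrite -[i.+1]addn1 PoszD addrK.
have H0 : (polypart r).[1] = 0.
  by move: H1; case: ((polypart r).[1]) => [[|[|//]]] ? H; apply/val_inj => //; exfalso; apply: H; apply/val_inj.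
case: Hr => [Hr0|]; last by [].
move: H0; rewrite (@pp1 r m Hmr) big_ltn ?(leq_ltn_trans _ Hmr) // => H0.
have -> : \sum_(1 <= k < m.+1) coef r k%:Z = \sum_(1 <= i < m) coef r i%:Z.
  rewrite big_nat_recr //= (_ : coef r m%:Z = 0) ?addr0 //.
  by apply: coef_bnd; rewrite ltz_nat.
move: Hr0; rewrite pp0 => Hr0.
by rewrite -Hr0 (F2_sub _ _ _ H0) addr0.
Qed.
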